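(* Let $P$ be a pair of pants with $\pi_1(P)=\langle \mathcal A,\mathcal B,\mathcal C\mid \mathcal C\mathcal B\mathcal A=1\rangle$ (generators corresponding to the boundary components). Then $\mathrm{rep}(\pi_1(P),\mathrm{SO}(3))$ contains a dense open subset consisting of triangular characters. Moreover, from any character one can find a path to triangular characters such that every point of the path except its starting point is triangular.
   Context: $\mathrm{rep}(\pi_1(P),\mathrm{SO}(3))=\mathrm{Hom}(\pi_1(P),\mathrm{SO}(3))/\mathrm{SO}(3)$ (conjugation quotient). For $x\in\mathbb S^2$ and $\theta$, $R_{x,\theta}\in\mathrm{SO}(3)$ denotes the rotation fixing $x$ by angle $\theta$ counterclockwise as seen from $x$. A representation $h:\pi_1(P)\to\mathrm{SO}(3)$ is triangular if there is a nondegenerate spherical triangle (bounded by three geodesic arcs of length $<\pi$, vertices not on a common great circle) with vertices $w_0,w_1,w_2$ in clockwise order and angles $\theta_0,\theta_1,\theta_2$ such that $h(\mathcal A)=R_{w_0,2\theta_0}$, $h(\mathcal B)=R_{w_1,2\theta_1}$, $h(\mathcal C)=R_{w_2,2\theta_2}$ (equivalently, $h$ is the holonomy of the spherical structure on $P$ obtained by gluing two copies of the triangle along corresponding edges). A character is triangular if it is the class of a triangular representation. *)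

(* Defs.v *)
From HB Require Import structures.
From mathcomp Require Import all_boot all_order all_algebra.
From mathcomp Require Import all_classical all_reals.
From mathcomp Require Import trigo.
Set Implicit Arguments. Unset Strict Implicit. Unset Printing Implicit Defensive.
Import Order.TTheory GRing.Theory Num.Theory.
Local Open Scope ring_scope.
Local Open Scope classical_set_scope.

Section Defs.
Variable R : realType.

Definition crd (v : 'cV[R]_3) (k : nat) : R := v (inord k) 0.

Definition dot (u v : 'cV[R]_3) : R := (u^T *m v) 0 0.

(* cross-product matrix: crossmx w *m v = w x v *)
Definition crossmx (w : 'cV[R]_3) : 'M[R]_3 :=
  \matrix_(i < 3, j < 3)
    match nat_of_ord i, nat_of_ord j with
    | 0, 1 => - crd w 2 | 0, 2 => crd w 1
    | 1, 0 => crd w 2   | 1, 2 => - crd w 0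
    | 2, 0 => - crd w 1 | 2, 1 => crd w 0
    | _, _ => 0
    end.

(* triple product w0 . (w1 x w2) = det [w0 w1 w2] *)
Definition tripleprod (w0 w1 w2 : 'cV[R]_3) : R := dot w0 (crossmx w1 *m w2).

Definition unit_vec (w : 'cV[R]_3) : Prop := dot w w = 1.

(* R_{x,theta}: rotation about the unit vector x by angle theta, counterclockwise
   as seen from x (right-hand rule), Rodrigues formula. *)
Definition rot (x : 'cV[R]_3) (theta : R) : 'M[R]_3 :=
  cos theta *: 1%:M + sin theta *: crossmx x + (1 - cos theta) *: (x *m x^T).

Definition SO3 (M : 'M[R]_3) : Prop := M^T *m M = 1%:M /\ \det M = 1.

(* A representation pi_1(P) = <A,B,C | CBA = 1> -> SO(3) is the triple
   (h(A), h(B), h(C)) of elements of SO(3) with h(C) h(B) h(A) = 1. *)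
Definition rep3 := ('M[R]_3 * 'M[R]_3 * 'M[R]_3)%type.
Definition hA (h : rep3) := h.1.1.
Definition hB (h : rep3) := h.1.2.
Definition hC (h : rep3) := h.2.

Definition is_hom (h : rep3) : Prop :=
  [/\ SO3 (hA h), SO3 (hB h), SO3 (hC h) & hC h *m hB h *m hA h = 1%:M].

Definition conj_rep (g : 'M[R]_3) (h : rep3) : rep3 :=
  (g *m hA h *m invmx g, g *m hB h *m invmx g, g *m hC h *m invmx g).

(* the character (conjugacy class) of h *)
Definition char_of (h : rep3) : set rep3 :=
  [set h' | exists2 g, SO3 g & h' = conj_rep g h].

Definition is_char (X : set rep3) : Prop := exists2 h, is_hom h & X = char_of h.

(* topology on Hom(pi_1(P), SO(3)) subset of (M_3(R))^3 : entrywise sup distance *)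
Definition close (h h' : rep3) (e : R) : Prop :=
  forall i j : 'I_3, [/\ `|hA h i j - hA h' i j| < e,
                         `|hB h i j - hB h' i j| < e &
                         `|hC h i j - hC h' i j| < e].

Definition open_hom (S : set rep3) : Prop :=
  S `<=` is_hom /\
  forall h, S h -> exists2 e : R, 0 < e &
     forall h', is_hom h' -> close h h' e -> S h'.

(* quotient topology on rep(pi_1(P), SO(3)) *)
Definition open_char (U : set (set rep3)) : Prop :=
  U `<=` is_char /\ open_hom [set h | is_hom h /\ U (char_of h)].

Definition dense_char (U : set (set rep3)) : Prop :=
  forall V, open_char V -> (exists X, V X) -> exists X, V X /\ U X.

Definition char_path (gamma : R -> set rep3) : Prop :=
  (forall t, 0 <= t <= 1 -> is_char (gamma t)) /\
  forall V, open_char V ->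
    forall t, 0 <= t <= 1 -> V (gamma t) ->
      exists2 e : R, 0 < e &
        forall s, 0 <= s <= 1 -> `|s - t| < e -> V (gamma s).

Definition sph_angle (w0 w1 w2 : 'cV[R]_3) (theta : R) : Prop :=
  let u1 := w1 - dot w0 w1 *: w0 in
  let u2 := w2 - dot w0 w2 *: w0 in
  0 < theta < pi /\
  cos theta = dot u1 u2 / (Num.sqrt (dot u1 u1) * Num.sqrt (dot u2 u2)).

(* nondegenerate spherical triangle with vertices w0 w1 w2 in clockwise order
   (seen from outside the sphere), i.e. det[w0 w1 w2] < 0 (which also gives
   non-coplanarity), with angles theta0 theta1 theta2 *)
Definition cw_triangle (w0 w1 w2 : 'cV[R]_3) (t0 t1 t2 : R) : Prop :=
  [/\ unit_vec w0, unit_vec w1, unit_vec w2 & tripleprod w0 w1 w2 < 0] /\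
  [/\ sph_angle w0 w1 w2 t0, sph_angle w1 w2 w0 t1 & sph_angle w2 w0 w1 t2].

Definition triangular (h : rep3) : Prop :=
  exists w0 w1 w2 : 'cV[R]_3, exists t0 t1 t2 : R,
    cw_triangle w0 w1 w2 t0 t1 t2 /\
    [/\ hA h = rot w0 (2 * t0), hB h = rot w1 (2 * t1) & hC h = rot w2 (2 * t2)].

Definition triangular_char (X : set rep3) : Prop :=
  exists h, [/\ is_hom h, X = char_of h & triangular h].

End Defs.

(* Main.v *)
Require Import Defs.
From HB Require Import structures.
From mathcomp Require Import all_boot all_order all_algebra.
From mathcomp Require Import all_classical all_reals.
From mathcomp Require Import trigo.
From mathcomp Require Import ring lra.
Require Import Defs.
Set Implicit Arguments. Unset Strict Implicit. Unset Printing Implicit Defensive.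
Import Order.TTheory GRing.Theory Num.Theory.
Local Open Scope ring_scope.


Section M3.
Variable R : realType.

Definition o0 : 'I_3 := @Ordinal 3 0 isT.
Definition o1 : 'I_3 := @Ordinal 3 1 isT.
Definition o2 : 'I_3 := @Ordinal 3 2 isT.

Lemma ord3P (i : 'I_3) : [\/ i = o0, i = o1 | i = o2].
Proof.
case: i => [[|[|[|n]]] Hi].
- by apply: Or31; apply: val_inj.
- by apply: Or32; apply: val_inj.
- by apply: Or33; apply: val_inj.
- by [].
Qed.

Definition mk3 (a b c d e f g h i : R) : 'M[R]_3 :=
  \matrix_(r < 3, s < 3)
    match nat_of_ord r, nat_of_ord s with
    | 0, 0 => a | 0, 1 => b | 0, _ => c
    | 1, 0 => d | 1, 1 => e | 1, _ => f
    | _, 0 => g | _, 1 => h | _, _ => i end.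

Ltac ord3 i := case: (ord3P i) => ->.

Lemma mk3E (M : 'M[R]_3) : M = mk3 (M o0 o0) (M o0 o1) (M o0 o2)
   (M o1 o0) (M o1 o1) (M o1 o2) (M o2 o0) (M o2 o1) (M o2 o2).
Proof. apply/matrixP => r s; rewrite mxE; by ord3 r; ord3 s. Qed.

Lemma mk3_mul a b c d e f g h i a' b' c' d' e' f' g' h' i' :
  mk3 a b c d e f g h i *m mk3 a' b' c' d' e' f' g' h' i' =
  mk3 (a*a'+b*d'+c*g') (a*b'+b*e'+c*h') (a*c'+b*f'+c*i')
      (d*a'+e*d'+f*g') (d*b'+e*e'+f*h') (d*c'+e*f'+f*i')
      (g*a'+h*d'+i*g') (g*b'+h*e'+i*h') (g*c'+h*f'+i*i').
Proof.
apply/matrixP => r s; rewrite !mxE !big_ord_recr big_ord0 /= !mxE /=.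
by ord3 r; ord3 s; rewrite /= add0r.
Qed.

Lemma mk3_tr a b c d e f g h i :
  (mk3 a b c d e f g h i)^T = mk3 a d g b e h c f i.
Proof. apply/matrixP => r s; rewrite !mxE; by ord3 r; ord3 s. Qed.

Lemma mk3_add a b c d e f g h i a' b' c' d' e' f' g' h' i' :
  mk3 a b c d e f g h i + mk3 a' b' c' d' e' f' g' h' i' =
  mk3 (a+a') (b+b') (c+c') (d+d') (e+e') (f+f') (g+g') (h+h') (i+i').
Proof. apply/matrixP => r s; rewrite !mxE; by ord3 r; ord3 s. Qed.

Lemma mk3_sub a b c d e f g h i a' b' c' d' e' f' g' h' i' :
  mk3 a b c d e f g h i - mk3 a' b' c' d' e' f' g' h' i' =
  mk3 (a-a') (b-b') (c-c') (d-d') (e-e') (f-f') (g-g') (h-h') (i-i').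
Proof. apply/matrixP => r s; rewrite !mxE; by ord3 r; ord3 s. Qed.

Lemma mk3_scale k a b c d e f g h i :
  k *: mk3 a b c d e f g h i =
  mk3 (k*a) (k*b) (k*c) (k*d) (k*e) (k*f) (k*g) (k*h) (k*i).
Proof. apply/matrixP => r s; rewrite !mxE; by ord3 r; ord3 s. Qed.

Lemma mk3_1 : (1%:M : 'M[R]_3) = mk3 1 0 0 0 1 0 0 0 1.
Proof. apply/matrixP => r s; rewrite !mxE; by ord3 r; ord3 s. Qed.

Lemma det2 (M : 'M[R]_2) : \det M = M 0 0 * M 1 1 - M 0 1 * M 1 0.
Proof.
rewrite (expand_det_row _ ord0) !big_ord_recr big_ord0 /= add0r.
rewrite /cofactor !det_mx11 !mxE /=.
have E0 : (widen_ord (leqnSn 1) ord_max : 'I_2) = 0 by apply/val_inj.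
have E1 : lift ord0 (0 : 'I_1) = 1 :> 'I_2 by apply/val_inj.
have E2 : lift ord_max (0 : 'I_1) = 0 :> 'I_2 by apply/val_inj.
have E3 : (ord_max : 'I_2) = 1 by apply/val_inj.
rewrite E0 E1 E2 E3 expr0 expr1; ring.
Qed.

Lemma mk3_det a b c d e f g h i :
  \det (mk3 a b c d e f g h i) =
  a * (e * i - f * h) - b * (d * i - f * g) + c * (d * h - e * g).
Proof.
rewrite (expand_det_row _ ord0) !big_ord_recr big_ord0 /= add0r.
rewrite /cofactor !det2 !mxE /=.
ring.
Qed.


Lemma mk3_tr1 a b c d e f g h i : \tr (mk3 a b c d e f g h i) = a + e + i.
Proof. by rewrite /mxtrace !big_ord_recr big_ord0 /= !mxE /= add0r. Qed.

Definition mkv (x y z : R) : 'cV[R]_3 :=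
  \col_(r < 3) match nat_of_ord r with 0 => x | 1 => y | _ => z end.

Lemma mkvE (v : 'cV[R]_3) : v = mkv (v o0 0) (v o1 0) (v o2 0).
Proof.
apply/matrixP => r s; rewrite mxE; have -> : s = 0 by apply: ord1.
by ord3 r.
Qed.

Lemma crd_mkv x y z :
  [/\ crd (mkv x y z) 0 = x, crd (mkv x y z) 1 = y & crd (mkv x y z) 2 = z].
Proof. by rewrite /crd !mxE !inordK. Qed.

Lemma dot_mkv a b c x y z : dot (mkv a b c) (mkv x y z) = a*x + b*y + c*z.
Proof. by rewrite /dot !mxE !big_ord_recr big_ord0 /= !mxE /= add0r. Qed.

Lemma crossmx_mkv x y z : crossmx (mkv x y z) = mk3 0 (-z) y z 0 (-x) (-y) x 0.
Proof.
apply/matrixP => r s; rewrite !mxE; case: (crd_mkv x y z) => E0 E1 E2.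
by ord3 r; ord3 s; rewrite /= ?E0 ?E1 ?E2.
Qed.

Lemma mk3_mulv a b c d e f g h i x y z :
  mk3 a b c d e f g h i *m mkv x y z = mkv (a*x+b*y+c*z) (d*x+e*y+f*z) (g*x+h*y+i*z).
Proof.
apply/matrixP => r s; rewrite !mxE !big_ord_recr big_ord0 /= !mxE /=.
by ord3 r; rewrite /= add0r.
Qed.

Lemma mkv_outer a b c x y z :
  mkv a b c *m (mkv x y z)^T = mk3 (a*x) (a*y) (a*z) (b*x) (b*y) (b*z) (c*x) (c*y) (c*z).
Proof.
apply/matrixP => r s; rewrite !mxE !big_ord_recr big_ord0 /= !mxE /=.
by ord3 r; ord3 s; rewrite /= add0r.
Qed.

Lemma mkv_scale k x y z : k *: mkv x y z = mkv (k*x) (k*y) (k*z).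
Proof. apply/matrixP => r s; rewrite !mxE; by ord3 r. Qed.

Lemma mkv_sub a b c x y z : mkv a b c - mkv x y z = mkv (a-x) (b-y) (c-z).
Proof. apply/matrixP => r s; rewrite !mxE; by ord3 r. Qed.

Lemma tripleprod_mkv a b c d e f g h i :
  tripleprod (mkv a b c) (mkv d e f) (mkv g h i) =
  a * (e * i - f * h) - b * (d * i - f * g) + c * (d * h - e * g).
Proof. rewrite /tripleprod crossmx_mkv mk3_mulv dot_mkv; ring. Qed.

Lemma rot_mkv x y z t : rot (mkv x y z) t =
  let c := cos t in let s := sin t in
  mk3 (c + (1-c)*(x*x)) (- s*z + (1-c)*(x*y)) (s*y + (1-c)*(x*z))
      (s*z + (1-c)*(y*x)) (c + (1-c)*(y*y)) (-s*x + (1-c)*(y*z))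
      (-s*y + (1-c)*(z*x)) (s*x + (1-c)*(z*y)) (c + (1-c)*(z*z)).
Proof.
rewrite /rot crossmx_mkv mkv_outer mk3_1 !mk3_scale !mk3_add /=.
by congr mk3; ring.
Qed.

Record quat := Quat { qa : R; qb : R; qc : R; qd : R }.

Definition Qm (x : quat) : 'M[R]_3 :=
  let: Quat a b c d := x in
  mk3 (a*a+b*b-c*c-d*d) (2*(b*c-a*d)) (2*(b*d+a*c))
      (2*(b*c+a*d)) (a*a-b*b+c*c-d*d) (2*(c*d-a*b))
      (2*(b*d-a*c)) (2*(c*d+a*b)) (a*a-b*b-c*c+d*d).

Definition qmul (x y : quat) : quat :=
  let: Quat a b c d := x in let: Quat a' b' c' d' := y in
  Quat (a*a' - b*b' - c*c' - d*d')
       (a*b' + a'*b + (c*d' - d*c'))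
       (a*c' + a'*c + (d*b' - b*d'))
       (a*d' + a'*d + (b*c' - c*b')).

Definition qconj (x : quat) := let: Quat a b c d := x in Quat a (-b) (-c) (-d).
Definition qopp (x : quat) := let: Quat a b c d := x in Quat (-a) (-b) (-c) (-d).
Definition qn2 (x : quat) := let: Quat a b c d := x in a*a+b*b+c*c+d*d.

Lemma Qm_mul x y : Qm x *m Qm y = Qm (qmul x y).
Proof. case: x => a b c d; case: y => a' b' c' d'; rewrite /= mk3_mul; congr mk3; ring. Qed.

Lemma Qm_tr x : (Qm x)^T = Qm (qconj x).
Proof. case: x => a b c d; rewrite /= mk3_tr; congr mk3; ring. Qed.

Lemma Qm_opp x : Qm (qopp x) = Qm x.
Proof. case: x => a b c d; rewrite /=; congr mk3; ring. Qed.

Lemma qn2_mul x y : qn2 (qmul x y) = qn2 x * qn2 y.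
Proof. case: x => a b c d; case: y => a' b' c' d'; rewrite /=; ring. Qed.

Lemma Qm_orth x : (Qm x)^T *m Qm x = (qn2 x)^+2 *: 1%:M.
Proof.
case: x => a b c d; rewrite /= mk3_tr mk3_mul mk3_1 mk3_scale; congr mk3; ring.
Qed.

Lemma Qm_det x : \det (Qm x) = (qn2 x)^+3.
Proof. case: x => a b c d; rewrite /= mk3_det; ring. Qed.

Lemma Qm_SO3 x : qn2 x = 1 -> SO3 (Qm x).
Proof. move=> H; rewrite /SO3 Qm_orth Qm_det H !expr1n scale1r; by split. Qed.

Lemma mul2r_ (t : R) : 2 * t = t + t.
Proof. ring. Qed.

Lemma rot_Qm x y z t : x*x + y*y + z*z = 1 ->
  rot (mkv x y z) (2 * t) = Qm (Quat (cos t) (sin t * x) (sin t * y) (sin t * z)).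
Proof.
move=> Hw; rewrite rot_mkv /= mul2r_ cosD sinD.
have Hcs := cos2Dsin2 t.
set c := cos t in Hcs *; set s := sin t in Hcs *.
have H1 : s^+2 * (x*x+y*y+z*z) = s^+2 by rewrite Hw mulr1.
have E : 1 - (c * c - s * s) = 2 * s * s by lra.
by rewrite E; congr mk3; lra.
Qed.

End M3.
Arguments Qm : simpl never.


Section Lift.
Variable R : realType.

Lemma sos3 (a b c : R) : a^+2 + b^+2 + c^+2 = 0 -> [/\ a = 0, b = 0 & c = 0].
Proof.
move=> H.
have ha : 0 <= a^+2 := sqr_ge0 a.
have hb : 0 <= b^+2 := sqr_ge0 b.
have hc : 0 <= c^+2 := sqr_ge0 c.
have ea : a^+2 = 0 by lra.
have eb : b^+2 = 0 by lra.
have ec : c^+2 = 0 by lra.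
by split; apply/eqP; rewrite -sqrf_eq0; apply/eqP.
Qed.

Lemma cof_gen (x0 x1 x2 y0 y1 y2 z0 z1 z2 : R) :
  y0*y0+y1*y1+y2*y2 = 1 -> z0*z0+z1*z1+z2*z2 = 1 -> y0*z0+y1*z1+y2*z2 = 0 ->
  x0*x0+x1*x1+x2*x2 = 1 ->
  x0*(y1*z2-y2*z1) + x1*(y2*z0-y0*z2) + x2*(y0*z1-y1*z0) = 1 ->
  [/\ y1*z2-y2*z1 = x0, y2*z0-y0*z2 = x1 & y0*z1-y1*z0 = x2].
Proof.
move=> Hy Hz Hyz Hx Hd.
have S : (y1*z2-y2*z1 - x0)^+2 + (y2*z0-y0*z2 - x1)^+2 + (y0*z1-y1*z0 - x2)^+2 = 0.
  have -> : (y1*z2-y2*z1 - x0)^+2 + (y2*z0-y0*z2 - x1)^+2 + (y0*z1-y1*z0 - x2)^+2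
    = (y0*y0+y1*y1+y2*y2)*(z0*z0+z1*z1+z2*z2) - (y0*z0+y1*z1+y2*z2)^+2
      - 2 * (x0*(y1*z2-y2*z1) + x1*(y2*z0-y0*z2) + x2*(y0*z1-y1*z0))
      + (x0*x0+x1*x1+x2*x2) by ring.
  rewrite Hy Hz Hyz Hd Hx; ring.
case: (sos3 S) => /eqP; rewrite subr_eq0 => /eqP -> /eqP; rewrite subr_eq0 => /eqP ->.
by move/eqP; rewrite subr_eq0 => /eqP ->.
Qed.

Ltac entries E :=
  let e00 := fresh "e" in let e01 := fresh "e" in let e02 := fresh "e" in
  let e10 := fresh "e" in let e11 := fresh "e" in let e12 := fresh "e" in
  let e20 := fresh "e" in let e21 := fresh "e" in let e22 := fresh "e" in
  have e00 := congr1 (fun M : 'M[R]_3 => M o0 o0) E;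
  have e01 := congr1 (fun M : 'M[R]_3 => M o0 o1) E;
  have e02 := congr1 (fun M : 'M[R]_3 => M o0 o2) E;
  have e10 := congr1 (fun M : 'M[R]_3 => M o1 o0) E;
  have e11 := congr1 (fun M : 'M[R]_3 => M o1 o1) E;
  have e12 := congr1 (fun M : 'M[R]_3 => M o1 o2) E;
  have e20 := congr1 (fun M : 'M[R]_3 => M o2 o0) E;
  have e21 := congr1 (fun M : 'M[R]_3 => M o2 o1) E;
  have e22 := congr1 (fun M : 'M[R]_3 => M o2 o2) E;
  rewrite /= !mxE /= in e00 e01 e02 e10 e11 e12 e20 e21 e22.

Definition Gm (a00 a01 a02 a10 a11 a12 a20 a21 a22 : R) (i j : nat) : R :=
  let t := a00 + a11 + a22 in
  match i, j with
  | 0, 0 => 1 + t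
  | 1, 1 => 1 + 2 * a00 - t
  | 2, 2 => 1 + 2 * a11 - t
  | 3, 3 => 1 + 2 * a22 - t
  | 0, 1 | 1, 0 => a21 - a12
  | 0, 2 | 2, 0 => a02 - a20
  | 0, 3 | 3, 0 => a10 - a01
  | 1, 2 | 2, 1 => a01 + a10
  | 1, 3 | 3, 1 => a02 + a20
  | 2, 3 | 3, 2 => a12 + a21
  | _, _ => 0
  end.

Lemma lift_mk3 a00 a01 a02 a10 a11 a12 a20 a21 a22 :
  SO3 (mk3 a00 a01 a02 a10 a11 a12 a20 a21 a22) ->
  exists p : quat R, qn2 p = 1 /\ Qm p = mk3 a00 a01 a02 a10 a11 a12 a20 a21 a22.
Proof.
case=> HC Hd.
have HR := mulmx1C HC.
rewrite mk3_tr mk3_mul mk3_1 in HC.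
rewrite mk3_tr mk3_mul mk3_1 in HR.
rewrite mk3_det in Hd.
entries HC. entries HR.
have [c00 c01 c02] : [/\ a11*a22-a12*a21 = a00, a12*a20-a10*a22 = a01 & a10*a21-a11*a20 = a02].
  by apply: cof_gen; lra.
have [c10 c11 c12] : [/\ a21*a02-a22*a01 = a10, a22*a00-a20*a02 = a11 & a20*a01-a21*a00 = a12].
  by apply: cof_gen; lra.
have [c20 c21 c22] : [/\ a01*a12-a02*a11 = a20, a02*a10-a00*a12 = a21 & a00*a11-a01*a10 = a22].
  by apply: cof_gen; lra.
clear HC HR.
set G := Gm a00 a01 a02 a10 a11 a12 a20 a21 a22.
have rk : forall m i j, (m < 4)%N -> (i < 4)%N -> (j < 4)%N ->
    G i j * G m m = G i m * G j m.
  move=> m i j; rewrite /G /Gm.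
  by case: m => [|[|[|[|//]]]]; case: i => [|[|[|[|//]]]]; case: j => [|[|[|[|//]]]] => _ _ _;
    lra.
have [m [Hm Gpos]] : exists m, (m < 4)%N /\ 0 < G m m.
  have Hs : G 0%N 0%N + G 1%N 1%N + G 2%N 2%N + G 3%N 3%N = 4 by rewrite /G /Gm; lra.
  case: (ltrP 0 (G 0%N 0%N)) => h0; first by exists 0%N.
  case: (ltrP 0 (G 1%N 1%N)) => h1; first by exists 1%N.
  case: (ltrP 0 (G 2%N 2%N)) => h2; first by exists 2%N.
  exists 3%N; split => //; lra.
set sq := Num.sqrt (G m m).
have sq0 : 0 < sq by rewrite sqrtr_gt0.
have sq2 : sq * sq = G m m by rewrite -expr2 sqr_sqrtr // ltW.
set p := fun i => G i m / (2 * sq).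
have pp : forall i j, (i < 4)%N -> (j < 4)%N -> 4 * (p i * p j) = G i j.
  move=> i j Hi Hj; rewrite /p.
  have Gm0 : G m m != 0 by apply/lt0r_neq0.
  have sqn0 : sq != 0 by apply/lt0r_neq0.
  apply: (mulIf Gm0); rewrite rk // -sq2; field.
  by rewrite sqn0.
have p00 := pp 0%N 0%N isT isT. have p01 := pp 0%N 1%N isT isT.
have p02 := pp 0%N 2%N isT isT. have p03 := pp 0%N 3%N isT isT.
have p11 := pp 1%N 1%N isT isT. have p12 := pp 1%N 2%N isT isT.
have p13 := pp 1%N 3%N isT isT. have p22 := pp 2%N 2%N isT isT.
have p23 := pp 2%N 3%N isT isT. have p33 := pp 3%N 3%N isT isT.
rewrite /G /Gm in p00 p01 p02 p03 p11 p12 p13 p22 p23 p33.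
exists (Quat (p 0%N) (p 1%N) (p 2%N) (p 3%N)); split.
  rewrite /=; lra.
rewrite /Qm; congr mk3; lra.
Qed.

Lemma lift (A : 'M[R]_3) : SO3 A -> exists p : quat R, qn2 p = 1 /\ Qm p = A.
Proof.
move=> H; have := @lift_mk3 (A o0 o0) (A o0 o1) (A o0 o2) (A o1 o0) (A o1 o1) (A o1 o2) (A o2 o0) (A o2 o1) (A o2 o2).
by rewrite -mk3E; apply.
Qed.

End Lift.


Section Tri.
Variable R : realType.

Lemma ratio_helper (A B C N D1 D2 kx ky kz : R) :
  0 < kx -> 0 < ky -> 0 < kz -> 0 < D1 -> 0 < D2 ->
  A = ky*kz*kx^+2*N -> B = ky^+2*kx^+2*D1 -> C = kz^+2*kx^+2*D2 ->
  N / Num.sqrt (D1 * D2) = A / (Num.sqrt B * Num.sqrt C).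
Proof.
move=> hx hy hz h1 h2 -> -> ->.
rewrite -!exprMn (sqrtrM _ (sqr_ge0 _)) (sqrtrM _ (sqr_ge0 _)) !sqrtr_sqr.
rewrite (sqrtrM _ (ltW h1)).
have s1 : 0 < Num.sqrt D1 by rewrite sqrtr_gt0.
have s2 : 0 < Num.sqrt D2 by rewrite sqrtr_gt0.
rewrite !gtr0_norm ?mulr_gt0 //.
field.
by rewrite !lt0r_neq0.
Qed.

Lemma sph_angle_gen (X0 X1 X2 Y0 Y1 Y2 Z0 Z1 Z2 kx ky kz th : R) :
  let gXX := X0*X0+X1*X1+X2*X2 in
  let gYY := Y0*Y0+Y1*Y1+Y2*Y2 in
  let gZZ := Z0*Z0+Z1*Z1+Z2*Z2 in
  let gXY := X0*Y0+X1*Y1+X2*Y2 in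
  let gXZ := X0*Z0+X1*Z1+X2*Z2 in
  let gYZ := Y0*Z0+Y1*Z1+Y2*Z2 in
  0 < kx -> 0 < ky -> 0 < kz -> kx^+2 * gXX = 1 ->
  0 < gXX * gYY - gXY^+2 -> 0 < gXX * gZZ - gXZ^+2 -> 0 < th < pi ->
  cos th = (gXX * gYZ - gXY * gXZ) / Num.sqrt ((gXX * gYY - gXY^+2) * (gXX * gZZ - gXZ^+2)) ->
  sph_angle (mkv (kx*X0) (kx*X1) (kx*X2)) (mkv (ky*Y0) (ky*Y1) (ky*Y2))
            (mkv (kz*Z0) (kz*Z1) (kz*Z2)) th.
Proof.
move=> gXX gYY gZZ gXY gXZ gYZ hx hy hz E h1 h2 hth hc.
rewrite /sph_angle /= !dot_mkv !mkv_scale !mkv_sub !dot_mkv; split => //.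
rewrite hc; apply: (@ratio_helper _ _ _ _ _ _ kx ky kz) => //.
- apply/eqP; rewrite -subr_eq0; apply/eqP.
  transitivity ((1 - kx^+2*gXX) * (ky*kz*(gYZ - kx^+2*gXY*gXZ))).
    by rewrite /gXX /gXY /gXZ /gYZ; ring.
  by rewrite E subrr mul0r.
- apply/eqP; rewrite -subr_eq0; apply/eqP.
  transitivity ((1 - kx^+2*gXX) * (ky^+2*(gYY - kx^+2*gXY^+2))).
    by rewrite /gXX /gXY /gYY; ring.
  by rewrite E subrr mul0r.
- apply/eqP; rewrite -subr_eq0; apply/eqP.
  transitivity ((1 - kx^+2*gXX) * (kz^+2*(gZZ - kx^+2*gXZ^+2))).
    by rewrite /gXX /gXZ /gZZ; ring.
  by rewrite E subrr mul0r.
Qed.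


Lemma sph_angle_gen2 (X0 X1 X2 Y0 Y1 Y2 Z0 Z1 Z2 kx ky kz th D1 D2 N : R) :
  0 < kx -> 0 < ky -> 0 < kz -> kx^+2 * (X0*X0+X1*X1+X2*X2) = 1 ->
  (X0*X0+X1*X1+X2*X2) * (Y0*Y0+Y1*Y1+Y2*Y2) - (X0*Y0+X1*Y1+X2*Y2)^+2 = D1 ->
  (X0*X0+X1*X1+X2*X2) * (Z0*Z0+Z1*Z1+Z2*Z2) - (X0*Z0+X1*Z1+X2*Z2)^+2 = D2 ->
  (X0*X0+X1*X1+X2*X2) * (Y0*Z0+Y1*Z1+Y2*Z2) - (X0*Y0+X1*Y1+X2*Y2) * (X0*Z0+X1*Z1+X2*Z2) = N ->
  0 < D1 -> 0 < D2 -> 0 < th < pi -> cos th = N / Num.sqrt (D1 * D2) ->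
  sph_angle (mkv (kx*X0) (kx*X1) (kx*X2)) (mkv (ky*Y0) (ky*Y1) (ky*Y2))
            (mkv (kz*Z0) (kz*Z1) (kz*Z2)) th.
Proof.
move=> hx hy hz E e1 e2 eN h1 h2 hth hc.
apply: sph_angle_gen => //; by rewrite ?e1 ?e2 ?eN.
Qed.

Definition Dq (p q : quat R) :=
  let: Quat _ b c d := p in let: Quat _ b' c' d' := q in
  (b*b+c*c+d*d)*(b'*b'+c'*c'+d'*d') - (b*b'+c*c'+d*d')^+2.

Lemma sqrt_sqr_pos (D : R) : 0 < D -> Num.sqrt (D * D) = D.
Proof. by move=> h; rewrite -expr2 sqrtr_sqr gtr0_norm. Qed.

Lemma unit_bounds (a g : R) : a*a + g = 1 -> 0 < g -> -1 < a < 1.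
Proof. move=> H hg; apply/andP; split; nra. Qed.

Lemma acos_facts (a : R) : -1 < a < 1 ->
  [/\ 0 < acos a < pi, cos (acos a) = a & sin (acos a) = Num.sqrt (1 - a^+2)].
Proof.
move=> /andP[h1 h2].
have hi : -1 <= a <= 1 by apply/andP; split; apply: ltW.
split.
- apply/andP; split; [apply: acos_gt0 | apply: acos_ltpi]; apply/andP; split => //; exact: ltW.
- by apply: acosK; rewrite in_itv /=.
- exact: sin_acos.
Qed.

Lemma tri_main (p q : quat R) : qn2 p = 1 -> qn2 q = 1 -> 0 < Dq p q ->
  triangular (Qm p, Qm q, (Qm q *m Qm p)^T).
Proof.
case: p => a b c d; case: q => a' b' c' d' Hp Hq HD; rewrite /= in Hp Hq HD.
set gP := b*b+c*c+d*d; set gQ := b'*b'+c'*c'+d'*d'; set g := b*b'+c*c'+d*d'.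
set D := gP * gQ - g^+2.
set ra := a'*a - b'*b - c'*c - d'*d.
set rb := a'*b + a*b' + (c'*d - d'*c).
set rc := a'*c + a*c' + (d'*b - b'*d).
set rd := a'*d + a*d' + (b'*c - c'*b).
set gV := rb*rb+rc*rc+rd*rd.
have gP0 : 0 <= gP by rewrite /gP; nra.
have gQ0 : 0 <= gQ by rewrite /gQ; nra.
have {}HD : 0 < D by exact: HD.
have gPQ : 0 < gP * gQ by have := sqr_ge0 g; rewrite /D in HD; lra.
have gPp : 0 < gP.
  rewrite lt0r gP0 andbT; apply: contraTneq gPQ => ->; by rewrite mul0r ltxx.
have gQp : 0 < gQ.
  rewrite lt0r gQ0 andbT; apply: contraTneq gPQ => ->; by rewrite mulr0 ltxx.
have eV : gP * gV - (b*rb+c*rc+d*rd)^+2 = D.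
  transitivity ((a*a+b*b+c*c+d*d) * D); last by rewrite Hp mul1r.
  by rewrite /D /gV /gP /gQ /g /rb /rc /rd; ring.
have gV0 : 0 <= gV by rewrite /gV; nra.
have gVp : 0 < gV.
  have : 0 < gP * gV by have := sqr_ge0 (b*rb+c*rc+d*rd); lra.
  move=> h; rewrite lt0r gV0 andbT; apply: contraTneq h => ->; by rewrite mulr0 ltxx.
have Hr : ra*ra + gV = 1.
  have := qn2_mul (Quat a' b' c' d') (Quat a b c d); rewrite /= Hp Hq mulr1 => <-.
  by rewrite /ra /gV /rb /rc /rd; ring.
set kP := (Num.sqrt gP)^-1; set kQ := (Num.sqrt gQ)^-1; set kV := (Num.sqrt gV)^-1.
have sP : 0 < Num.sqrt gP by rewrite sqrtr_gt0.
have sQ : 0 < Num.sqrt gQ by rewrite sqrtr_gt0.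
have sV : 0 < Num.sqrt gV by rewrite sqrtr_gt0.
have kP0 : 0 < kP by rewrite invr_gt0.
have kQ0 : 0 < kQ by rewrite invr_gt0.
have kV0 : 0 < kV by rewrite invr_gt0.
have kPE : kP^+2 * gP = 1.
  by rewrite /kP exprVn -{2}(sqr_sqrtr (ltW gPp)) mulVf // expf_neq0 // lt0r_neq0.
have kQE : kQ^+2 * gQ = 1.
  by rewrite /kQ exprVn -{2}(sqr_sqrtr (ltW gQp)) mulVf // expf_neq0 // lt0r_neq0.
have kVE : kV^+2 * gV = 1.
  by rewrite /kV exprVn -{2}(sqr_sqrtr (ltW gVp)) mulVf // expf_neq0 // lt0r_neq0.
have [th0 c0 s0] : [/\ 0 < acos a < pi, cos (acos a) = a & sin (acos a) = Num.sqrt gP].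
  have hb := @unit_bounds a gP ltac:(rewrite /gP; lra) gPp.
  case: (acos_facts hb) => h1 h2 ->; split => //; congr Num.sqrt; rewrite /gP; lra.
have [th1 c1 s1] : [/\ 0 < acos a' < pi, cos (acos a') = a' & sin (acos a') = Num.sqrt gQ].
  have hb := @unit_bounds a' gQ ltac:(rewrite /gQ; lra) gQp.
  case: (acos_facts hb) => h1 h2 ->; split => //; congr Num.sqrt; rewrite /gQ; lra.
have [th2 c2 s2] : [/\ 0 < acos (-ra) < pi, cos (acos (-ra)) = -ra &
                       sin (acos (-ra)) = Num.sqrt gV].
  have hb := @unit_bounds (-ra) gV ltac:(lra) gVp.
  case: (acos_facts hb) => h1 h2 ->; split => //; congr Num.sqrt; rewrite sqrrN; lra.
exists (mkv (kP*b) (kP*c) (kP*d)), (mkv (kQ*b') (kQ*c') (kQ*d')), (mkv (kV*rb) (kV*rc) (kV*rd)).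
exists (acos a), (acos a'), (acos (-ra)).
have eV' : gQ * gV - (b'*rb+c'*rc+d'*rd)^+2 = D.
  transitivity ((a'*a'+b'*b'+c'*c'+d'*d') * D); last by rewrite Hq mul1r.
  by rewrite /D /gV /gP /gQ /g /rb /rc /rd; ring.
have sD := sqrt_sqr_pos HD.
have D0 : D != 0 by apply: lt0r_neq0.
split; first split.
- split.
  + rewrite /unit_vec dot_mkv -kPE /gP; ring.
  + rewrite /unit_vec dot_mkv -kQE /gQ; ring.
  + rewrite /unit_vec dot_mkv -kVE /gV; ring.
  + rewrite tripleprod_mkv.
    have -> : kP * b * (kQ * c' * (kV * rd) - kQ * d' * (kV * rc)) -
      kP * c * (kQ * b' * (kV * rd) - kQ * d' * (kV * rb)) +
      kP * d * (kQ * b' * (kV * rc) - kQ * c' * (kV * rb)) = - (kP * kQ * kV * D).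
      by rewrite /D /gP /gQ /g /rb /rc /rd; ring.
    by rewrite oppr_lt0 !mulr_gt0.
- split.
  + apply: (@sph_angle_gen2 _ _ _ _ _ _ _ _ _ _ _ _ _ D D (a*D)) => //.
    * by rewrite /D /gV /gP /gQ /g /rb /rc /rd; ring.
    * by rewrite c0 sD mulfK.
  + apply: (@sph_angle_gen2 _ _ _ _ _ _ _ _ _ _ _ _ _ D D (a'*D)) => //.
    * by rewrite /D /gP /gQ /g; ring.
    * by rewrite /D /gV /gP /gQ /g /rb /rc /rd; ring.
    * by rewrite c1 sD mulfK.
  + apply: (@sph_angle_gen2 _ _ _ _ _ _ _ _ _ _ _ _ _ D D (D*(g - a*a'))) => //.
    * by rewrite -eV /gP /gV; ring.
    * by rewrite -eV' /gQ /gV; ring.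
    * by rewrite /D /gV /gP /gQ /g /rb /rc /rd; ring.
    * by rewrite c2 sD mulrC mulKf // /ra /g; ring.
- split => /=.
  + rewrite rot_Qm; last by rewrite -kPE /gP; ring.
    rewrite c0 s0; congr (Qm (Quat _ _ _ _)); rewrite mulrA mulfV ?mul1r //; exact: lt0r_neq0.
  + rewrite rot_Qm; last by rewrite -kQE /gQ; ring.
    rewrite c1 s1; congr (Qm (Quat _ _ _ _)); rewrite mulrA mulfV ?mul1r //; exact: lt0r_neq0.
  + rewrite rot_Qm; last by rewrite -kVE /gV; ring.
    rewrite c2 s2 !mulrA mulfV ?mul1r; last exact: lt0r_neq0.
    rewrite trmx_mul !Qm_tr Qm_mul -Qm_opp /=.
    by congr (Qm (Quat _ _ _ _)); rewrite /ra /rb /rc /rd; ring.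
Qed.

End Tri.


Section Top.
Ltac ord3 i := case: (ord3P i) => ->.
Variable R : realType.

Definition skw (M : 'M[R]_3) := M - M^T.
Definition Sinv (h : rep3 R) :=
  \tr (skw (hA h) *m skw (hA h)) * \tr (skw (hB h) *m skw (hB h))
  - (\tr (skw (hA h) *m skw (hB h)))^+2.

Lemma SO3_inv (g : 'M[R]_3) : SO3 g -> invmx g = g^T.
Proof.
case=> H _.
have [_ u] := mulmx1_unit H.
by rewrite -[LHS]mul1mx -H -mulmxA mulmxV // mulmx1.
Qed.

Lemma SO3_orth' (g : 'M[R]_3) : SO3 g -> g *m g^T = 1%:M.
Proof. by case=> H _; apply: mulmx1C. Qed.

Lemma skw_conj (g A : 'M[R]_3) : SO3 g -> skw (g *m A *m invmx g) = g *m skw A *m g^T.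
Proof.
move=> hg; rewrite (SO3_inv hg) /skw !trmx_mul trmxK.
by rewrite mulmxBr mulmxBl !mulmxA.
Qed.

Lemma tr_conj (g X Y : 'M[R]_3) : SO3 g ->
  \tr ((g *m X *m g^T) *m (g *m Y *m g^T)) = \tr (X *m Y).
Proof.
move=> hg; case: (hg) => H _.
have E : g *m X *m g^T *m (g *m Y *m g^T) = g *m (X *m Y *m g^T).
  by rewrite !mulmxA -(mulmxA (g *m X)) H mulmx1 -!mulmxA.
by rewrite E mxtrace_mulC -(mulmxA (X *m Y)) H mulmx1.
Qed.

Lemma Sinv_conj (g : 'M[R]_3) h : SO3 g -> Sinv (conj_rep g h) = Sinv h.
Proof.
move=> hg; rewrite /Sinv /conj_rep /hA /hB /= !skw_conj //.
by rewrite !tr_conj.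
Qed.

Lemma Sinv_Qm (p q : quat R) C :
  Sinv (Qm p, Qm q, C) = 1024 * (qa p)^+2 * (qa q)^+2 * Dq p q.
Proof.
case: p => a b c d; case: q => a' b' c' d'.
rewrite /Sinv /hA /hB /= /skw /Qm !mk3_tr.
rewrite !(mk3_sub, mk3_mul, mk3_tr1) /=; ring.
Qed.


Lemma S_pos_tri h : is_hom h -> 0 < Sinv h -> triangular h.
Proof.
case: h => [[A B] C]; case; rewrite /hA /hB /hC /= => hAs hBs hCs hCBA hS.
have [p [np ep]] := lift hAs.
have [q [nq eq]] := lift hBs.
have eC : C = (B *m A)^T.
  have E : (B *m A) *m (B *m A)^T = 1%:M.
    rewrite trmx_mul mulmxA -(mulmxA B) (SO3_orth' hAs) mulmx1.
    exact: SO3_orth'.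
  by rewrite -[C]mulmx1 -E !mulmxA hCBA mul1mx.
rewrite eC -ep -eq; apply: tri_main => //.
move: hS; rewrite eC -ep -eq Sinv_Qm.
case: (ltrP 0 (Dq p q)) => // hD hS.
have : 1024 * qa p ^+ 2 * qa q ^+ 2 * Dq p q <= 0.
  apply: mulr_ge0_le0 => //; apply: mulr_ge0; [apply: mulr_ge0 => //|]; exact: sqr_ge0.
by rewrite leNgt hS.
Qed.

Lemma SO3_entry (M : 'M[R]_3) r s : SO3 M -> `|M r s| <= 1.
Proof.
case=> H _; move: H; rewrite [in LHS](mk3E M) mk3_tr mk3_mul mk3_1 => H.
have e0 := congr1 (fun N : 'M[R]_3 => N o0 o0) H.
have e1 := congr1 (fun N : 'M[R]_3 => N o1 o1) H.
have e2 := congr1 (fun N : 'M[R]_3 => N o2 o2) H.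
rewrite !mxE /= in e0 e1 e2.
rewrite ler_norml; by ord3 r; ord3 s; apply/andP; split; nra.
Qed.

Definition vc (M : 'M[R]_3) (i : nat) : R :=
  match i with 0 => M o2 o1 - M o1 o2 | 1 => M o0 o2 - M o2 o0 | _ => M o1 o0 - M o0 o1 end.

Definition cc (h : rep3 R) (k : nat) :=
  let i := (k.+1 %% 3)%N in let j := (k.+2 %% 3)%N in
  vc (hA h) i * vc (hB h) j - vc (hA h) j * vc (hB h) i.

Lemma Sinv_cc h : Sinv h = 4 * (cc h 0 ^+ 2 + cc h 1 ^+ 2 + cc h 2 ^+ 2).
Proof.
case: h => [[A B] C]; rewrite /Sinv /cc /hA /hB /=.
rewrite [in LHS](mk3E A) [in LHS](mk3E B).
rewrite /skw !(mk3_tr, mk3_sub, mk3_mul, mk3_tr1) /vc /=; ring.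
Qed.

Lemma vc_bound (M : 'M[R]_3) i : SO3 M -> `|vc M i| <= 2.
Proof.
move=> hM.
have H : forall r s r' s', `|M r s - M r' s'| <= 2.
  move=> r s r' s'; apply: (le_trans (ler_normB _ _)).
  have := SO3_entry r s hM; have := SO3_entry r' s' hM; lra.
by case: i => [|[|i]] /=; apply: H.
Qed.

Lemma vc_close (M M' : 'M[R]_3) i e : (forall r s, `|M r s - M' r s| < e) ->
  `|vc M i - vc M' i| < 2 * e.
Proof.
move=> H.
have G : forall r s r' s', `|(M r s - M r' s') - (M' r s - M' r' s')| < 2 * e.
  move=> r s r' s'.
  have -> : (M r s - M r' s') - (M' r s - M' r' s') = (M r s - M' r s) - (M r' s' - M' r' s') by ring.
  apply: (le_lt_trans (ler_normB _ _)).
  have := H r s; have := H r' s'; lra.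
by case: i => [|[|i]] /=; apply: G.
Qed.

Lemma prod_close (u v u' v' e : R) : `|u| <= 2 -> `|v'| <= 2 ->
  `|u - u'| < 2 * e -> `|v - v'| < 2 * e -> `|u * v - u' * v'| < 8 * e.
Proof.
move=> hu hv h1 h2.
have -> : u * v - u' * v' = u * (v - v') + v' * (u - u') by ring.
apply: (le_lt_trans (ler_normD _ _)); rewrite !normrM.
have a1 : `|u| * `|v - v'| <= 2 * `|v - v'| by apply: ler_wpM2r.
have a2 : `|v'| * `|u - u'| <= 2 * `|u - u'| by apply: ler_wpM2r.
lra.
Qed.

Lemma cc_close h h' k e : is_hom h -> is_hom h' -> close h h' e ->
  `|cc h k - cc h' k| < 16 * e.
Proof.
case=> hA1 hB1 _ _; case=> hA2 hB2 _ _ hc.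
have cA : forall r s, `|hA h r s - hA h' r s| < e by move=> r s; case: (hc r s).
have cB : forall r s, `|hB h r s - hB h' r s| < e by move=> r s; case: (hc r s).
rewrite /cc.
set i := (k.+1 %% 3)%N; set j := (k.+2 %% 3)%N.
have -> : vc (hA h) i * vc (hB h) j - vc (hA h) j * vc (hB h) i -
   (vc (hA h') i * vc (hB h') j - vc (hA h') j * vc (hB h') i) =
   (vc (hA h) i * vc (hB h) j - vc (hA h') i * vc (hB h') j) -
   (vc (hA h) j * vc (hB h) i - vc (hA h') j * vc (hB h') i) by ring.
apply: (le_lt_trans (ler_normB _ _)).
have p1 := prod_close (vc_bound i hA1) (vc_bound j hB2) (vc_close i cA) (vc_close j cB).
have p2 := prod_close (vc_bound j hA1) (vc_bound i hB2) (vc_close j cA) (vc_close i cB).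
lra.
Qed.

Lemma Sinv_open h : is_hom h -> 0 < Sinv h ->
  exists2 e : R, 0 < e & forall h', is_hom h' -> close h h' e -> 0 < Sinv h'.
Proof.
move=> hh hS.
have [k [k3 hk]] : exists k, (k < 3)%N /\ cc h k != 0.
  case: (eqVneq (cc h 0) 0) => h0; last by exists 0%N.
  case: (eqVneq (cc h 1) 0) => h1; last by exists 1%N.
  case: (eqVneq (cc h 2) 0) => h2; last by exists 2%N.
  by move: hS; rewrite Sinv_cc h0 h1 h2 /= expr0n /= !addr0 mulr0 ltxx.
have nk : 0 < `|cc h k| by rewrite normr_gt0.
exists (`|cc h k| / 16); first by rewrite divr_gt0.
move=> h' hh' hc.
have := cc_close k hh hh' hc.
have -> : 16 * (`|cc h k| / 16) = `|cc h k| by field.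
move=> hlt.
have hk' : cc h' k != 0.
  apply/negP => /eqP e0; move: hlt; rewrite e0 subr0 ltxx //.
rewrite Sinv_cc.
have hpos : 0 < cc h' k ^+ 2 by rewrite lt0r sqr_ge0 andbT sqrf_eq0.
have s0 := sqr_ge0 (cc h' 0); have s1 := sqr_ge0 (cc h' 1); have s2 := sqr_ge0 (cc h' 2).
destruct k as [|[|[|k]]]; [lra | lra | lra | done].
Qed.

End Top.

From mathcomp Require Import topology normedtype realfun.
Require Import Defs.
Import numFieldNormedType.Exports.


Section Cont.
Variable R : realType.

Lemma near_eps (t : R) (P : R -> Prop) : (\forall s \near t, P s) ->
  exists2 d : R, 0 < d & forall s, `|s - t| < d -> P s.
Proof.
move=> /nbhs_ballP [d d0 H]; exists d => // s hs; apply: H.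
by rewrite -ball_normE /ball_ /= distrC.
Qed.

Lemma ct_near (f : R -> R) t e : {for t, continuous f} -> 0 < e ->
  \forall s \near t, `|f t - f s| < e.
Proof. by move=> /cvgrPdist_lt H /H. Qed.

Lemma ct_const (c t : R) : {for t, continuous (fun _ : R => c)}.
Proof. exact: cvg_cst. Qed.

Lemma ct_id (t : R) : {for t, continuous (fun s : R => s)}.
Proof. exact: cvg_id. Qed.

Lemma ct_add (f g : R -> R) t : {for t, continuous f} -> {for t, continuous g} ->
  {for t, continuous (fun s => f s + g s)}.
Proof. exact: continuousD. Qed.

Lemma ct_mul (f g : R -> R) t : {for t, continuous f} -> {for t, continuous g} ->
  {for t, continuous (fun s => f s * g s)}.
Proof. exact: continuousM. Qed.

Lemma ct_opp (f : R -> R) t : {for t, continuous f} ->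
  {for t, continuous (fun s => - f s)}.
Proof. exact: continuousN. Qed.

Lemma ct_inv (f : R -> R) t : f t != 0 -> {for t, continuous f} ->
  {for t, continuous (fun s => (f s)^-1)}.
Proof. exact: continuousV. Qed.

Lemma ct_sqrt (f : R -> R) t : {for t, continuous f} ->
  {for t, continuous (fun s => Num.sqrt (f s))}.
Proof.
move=> hf; apply: continuous_comp => //.
exact: sqrt_continuous.
Qed.

End Cont.


Section Path.
Variable R : realType.
Ltac ord3 i := case: (ord3P i) => ->.

Definition qline (p u : quat R) (t : R) :=
  Quat (qa p + t * qa u) (qb p + t * qb u) (qc p + t * qc u) (qd p + t * qd u).
Definition qnorm (x : quat R) :=
  let k := (Num.sqrt (qn2 x))^-1 in Quat (k * qa x) (k * qb x) (k * qc x) (k * qd x).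
Definition Hpath (p q u w : quat R) (t : R) : rep3 R :=
  let x := qnorm (qline p u t) in let y := qnorm (qline q w t) in
  (Qm x, Qm y, Qm (qconj (qmul y x))).

Lemma qn2E (x : quat R) : qn2 x = qa x * qa x + qb x * qb x + qc x * qc x + qd x * qd x.
Proof. by case: x. Qed.

Lemma qnorm_unit x : 0 < qn2 x -> qn2 (qnorm x) = 1.
Proof.
move=> hx.
have s0 : 0 < Num.sqrt (qn2 x) by rewrite sqrtr_gt0.
have s2 : Num.sqrt (qn2 x) ^+ 2 = qn2 x by rewrite sqr_sqrtr // ltW.
have -> : qn2 (qnorm x) = (Num.sqrt (qn2 x))^-1 ^+ 2 * qn2 x.
  by rewrite /qnorm !qn2E /=; ring.
by rewrite exprVn -{2}s2 mulVf // expf_neq0 // lt0r_neq0.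
Qed.

Lemma qn2_conj (x : quat R) : qn2 (qconj x) = qn2 x.
Proof. case: x => a b c d /=; ring. Qed.

Lemma Qm1 : Qm (Quat 1 0 0 0) = 1%:M :> 'M[R]_3.
Proof. rewrite /Qm mk3_1; congr mk3; ring. Qed.

Lemma conj_mul_id (x y : quat R) :
  qmul (qmul (qconj (qmul y x)) y) x = Quat (qn2 y * qn2 x) 0 0 0.
Proof. case: x => a b c d; case: y => a' b' c' d' /=; congr Quat; ring. Qed.

Lemma Hpath_hom p q u w t : 0 < qn2 (qline p u t) -> 0 < qn2 (qline q w t) ->
  is_hom (Hpath p q u w t).
Proof.
move=> h1 h2; rewrite /Hpath.
set x := qnorm _; set y := qnorm _.
have nx : qn2 x = 1 by exact: qnorm_unit.
have ny : qn2 y = 1 by exact: qnorm_unit.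
split.
- exact: Qm_SO3.
- exact: Qm_SO3.
- by apply: Qm_SO3; rewrite qn2_conj qn2_mul nx ny mulr1.
- change (Qm (qconj (qmul y x)) *m Qm y *m Qm x = 1%:M).
  by rewrite !Qm_mul conj_mul_id nx ny mulr1 Qm1.
Qed.

Lemma Hpath0 (p q u w : quat R) : qn2 p = 1 -> qn2 q = 1 ->
  Hpath p q u w 0 = (Qm p, Qm q, (Qm q *m Qm p)^T).
Proof.
move=> hp hq; rewrite /Hpath /qnorm /qline.
have ep : Quat (qa p + 0 * qa u) (qb p + 0 * qb u) (qc p + 0 * qc u) (qd p + 0 * qd u) = p.
  by case: p hp => a b c d _ /=; rewrite !mul0r !addr0.
have eq : Quat (qa q + 0 * qa w) (qb q + 0 * qb w) (qc q + 0 * qc w) (qd q + 0 * qd w) = q.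
  by case: q hq => a b c d _ /=; rewrite !mul0r !addr0.
rewrite ep eq hp hq sqrtr1 invr1 !mul1r.
have -> : Quat (qa p) (qb p) (qc p) (qd p) = p by case: (p).
have -> : Quat (qa q) (qb q) (qc q) (qd q) = q by case: (q).
by rewrite Qm_mul Qm_tr.
Qed.

Lemma Dq_scale (x y : quat R) k l :
  Dq (Quat (k * qa x) (k * qb x) (k * qc x) (k * qd x))
     (Quat (l * qa y) (l * qb y) (l * qc y) (l * qd y)) = k^+2 * l^+2 * Dq x y.
Proof. case: x => a b c d; case: y => a' b' c' d' /=; ring. Qed.

Lemma Hpath_S p q u w t : 0 < qn2 (qline p u t) -> 0 < qn2 (qline q w t) ->
  0 < qa (qline p u t) -> 0 < qa (qline q w t) ->
  0 < Dq (qline p u t) (qline q w t) -> 0 < Sinv (Hpath p q u w t).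
Proof.
move=> n1 n2 a1 a2 hD; rewrite /Hpath Sinv_Qm /qnorm Dq_scale /=.
set k := (Num.sqrt _)^-1; set l := (Num.sqrt _)^-1.
have k0 : 0 < k by rewrite invr_gt0 sqrtr_gt0.
have l0 : 0 < l by rewrite invr_gt0 sqrtr_gt0.
apply: mulr_gt0; last by apply: mulr_gt0 => //; apply: mulr_gt0; rewrite exprn_gt0.
apply: mulr_gt0; first apply: mulr_gt0 => //; apply: exprn_gt0; exact: mulr_gt0.
Qed.


Definition ctq (x : R -> quat R) t :=
  [/\ {for t, continuous (fun s => qa (x s))}, {for t, continuous (fun s => qb (x s))},
      {for t, continuous (fun s => qc (x s))} & {for t, continuous (fun s => qd (x s))}].

Ltac ctac := repeat first
  [ assumption | apply: ct_add | apply: ct_mul | apply: ct_opp | apply: ct_id | apply: ct_const ].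

Lemma ctq_line p u t : ctq (qline p u) t.
Proof. split; rewrite /qline /=; ctac. Qed.

Lemma ct_qn2 x t : ctq x t -> {for t, continuous (fun s => qn2 (x s))}.
Proof.
case=> ha hb hc hd.
have -> : (fun s => qn2 (x s)) =
  (fun s => qa (x s) * qa (x s) + qb (x s) * qb (x s) + qc (x s) * qc (x s) + qd (x s) * qd (x s)).
  by apply: funext => s; rewrite qn2E.
ctac.
Qed.

Lemma ctq_norm x t : ctq x t -> 0 < qn2 (x t) -> ctq (fun s => qnorm (x s)) t.
Proof.
move=> hx hn.
have hk : {for t, continuous (fun s => (Num.sqrt (qn2 (x s)))^-1)}.
  apply: ct_inv; first by rewrite lt0r_neq0 // sqrtr_gt0.
  by apply: ct_sqrt; apply: ct_qn2.
case: hx => ha hb hc hd.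
by split; rewrite /qnorm /=; ctac.
Qed.

Lemma ctq_mulconj x y t : ctq x t -> ctq y t -> ctq (fun s => qconj (qmul (y s) (x s))) t.
Proof.
case=> ha hb hc hd; case=> ha' hb' hc' hd'.
have E : forall a b : quat R, qconj (qmul b a) =
  Quat (qa b * qa a - qb b * qb a - qc b * qc a - qd b * qd a)
       (- (qa b * qb a + qa a * qb b + (qc b * qd a - qd b * qc a)))
       (- (qa b * qc a + qa a * qc b + (qd b * qb a - qb b * qd a)))
       (- (qa b * qd a + qa a * qd b + (qb b * qc a - qc b * qb a))).
  by move=> [a1 b1 c1 d1] [a2 b2 c2 d2].
have -> : (fun s => qconj (qmul (y s) (x s))) = (fun s =>
  Quat (qa (y s) * qa (x s) - qb (y s) * qb (x s) - qc (y s) * qc (x s) - qd (y s) * qd (x s))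
       (- (qa (y s) * qb (x s) + qa (x s) * qb (y s) + (qc (y s) * qd (x s) - qd (y s) * qc (x s))))
       (- (qa (y s) * qc (x s) + qa (x s) * qc (y s) + (qd (y s) * qb (x s) - qb (y s) * qd (x s))))
       (- (qa (y s) * qd (x s) + qa (x s) * qd (y s) + (qb (y s) * qc (x s) - qc (y s) * qb (x s))))).
  by apply: funext => s; rewrite E.
by split => /=; ctac.
Qed.

Lemma QmE (x : quat R) : Qm x =
  mk3 (qa x*qa x+qb x*qb x-qc x*qc x-qd x*qd x) (2*(qb x*qc x-qa x*qd x)) (2*(qb x*qd x+qa x*qc x))
      (2*(qb x*qc x+qa x*qd x)) (qa x*qa x-qb x*qb x+qc x*qc x-qd x*qd x) (2*(qc x*qd x-qa x*qb x))
      (2*(qb x*qd x-qa x*qc x)) (2*(qc x*qd x+qa x*qb x)) (qa x*qa x-qb x*qb x-qc x*qc x+qd x*qd x).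
Proof. by case: x. Qed.

Lemma ct_ext (f g : R -> R) t : (forall s, f s = g s) -> {for t, continuous g} ->
  {for t, continuous f}.
Proof. by move=> E; rewrite (funext E). Qed.

Lemma ctm_Qm x t : ctq x t -> forall i j, {for t, continuous (fun s => Qm (x s) i j)}.
Proof.
case=> ha hb hc hd i j.
by ord3 i; ord3 j; (apply: ct_ext; first by move=> s; rewrite QmE mxE /=; reflexivity); ctac.
Qed.


Lemma Hpath_ct p q u w t : 0 < qn2 (qline p u t) -> 0 < qn2 (qline q w t) ->
  forall e, 0 < e -> exists2 d : R, 0 < d &
    forall s, `|s - t| < d -> close (Hpath p q u w t) (Hpath p q u w s) e.
Proof.
move=> n1 n2 e e0.
have cx := ctq_norm (ctq_line p u t) n1.
have cy := ctq_norm (ctq_line q w t) n2.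
have cz := ctq_mulconj cx cy.
have h1 : \forall s \near t, forall ij : 'I_3 * 'I_3,
    `|Qm (qnorm (qline p u t)) ij.1 ij.2 - Qm (qnorm (qline p u s)) ij.1 ij.2| < e.
  apply: (@filter_forall _ _ _ _ (nbhs_filter t)) => ij; apply: (ct_near (f := fun s => Qm (qnorm (qline p u s)) ij.1 ij.2)) => //.
  exact: ctm_Qm.
have h2 : \forall s \near t, forall ij : 'I_3 * 'I_3,
    `|Qm (qnorm (qline q w t)) ij.1 ij.2 - Qm (qnorm (qline q w s)) ij.1 ij.2| < e.
  apply: (@filter_forall _ _ _ _ (nbhs_filter t)) => ij; apply: (ct_near (f := fun s => Qm (qnorm (qline q w s)) ij.1 ij.2)) => //.
  exact: ctm_Qm.
have h3 : \forall s \near t, forall ij : 'I_3 * 'I_3,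
    `|Qm (qconj (qmul (qnorm (qline q w t)) (qnorm (qline p u t)))) ij.1 ij.2 -
      Qm (qconj (qmul (qnorm (qline q w s)) (qnorm (qline p u s)))) ij.1 ij.2| < e.
  apply: (@filter_forall _ _ _ _ (nbhs_filter t)) => ij.
  apply: (ct_near (f := fun s => Qm (qconj (qmul (qnorm (qline q w s)) (qnorm (qline p u s)))) ij.1 ij.2)) => //.
  exact: (ctm_Qm cz).
have h23 := proj2 (near_andP _ _ (nbhs_filter t)) (conj h2 h3).
have h12 := proj2 (near_andP _ _ (nbhs_filter t)) (conj h1 h23).
have [d d0 hd] := near_eps h12.
exists d => // s hs r c.
case: (hd s hs) => H1 [H2 H3].
split; [exact: (H1 (r, c)) | exact: (H2 (r, c)) | exact: (H3 (r, c))].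
Qed.


Lemma Dq_cross (x y : quat R) : Dq x y =
  (qc x * qd y - qd x * qc y)^+2 + (qd x * qb y - qb x * qd y)^+2 + (qb x * qc y - qc x * qb y)^+2.
Proof. case: x => a b c d; case: y => a' b' c' d' /=; ring. Qed.

Lemma dir_choice (p q : quat R) : exists u w : quat R,
  [/\ qa u = 1, qa w = 1 & forall t, 0 < t -> 0 < Dq (qline p u t) (qline q w t)].
Proof.
case: (ltrP 0 (Dq p q)) => hD.
  exists (Quat 1 0 0 0), (Quat 1 0 0 0); split => // t ht.
  by move: hD; rewrite !Dq_cross /qline /= !mulr0 !addr0.
have z : Dq p q = 0.
  apply/eqP; rewrite eq_le hD /= Dq_cross; apply: addr_ge0; [apply: addr_ge0|]; exact: sqr_ge0.
move: z; rewrite Dq_cross => /sos3 [_ _ z3].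
have [sx [hx1 hx2]] : exists sx : R, sx * sx = 1 /\ 0 <= sx * qb p.
  by case: (lerP 0 (qb p)) => h; [exists 1 | exists (-1)]; split; lra.
have [sy [hy1 hy2]] : exists sy : R, sy * sy = 1 /\ 0 <= sy * qc q.
  by case: (lerP 0 (qc q)) => h; [exists 1 | exists (-1)]; split; lra.
exists (Quat 1 sx 0 0), (Quat 1 0 sy 0); split => // t ht.
rewrite Dq_cross /qline /=.
set c3 := (qb p + t * sx) * (qc q + t * sy) - (qc p + t * 0) * (qb q + t * 0).
have key : sx * sy * c3 = sx * sy * (qb p * qc q - qc p * qb q)
   + t * ((sy * sy) * (sx * qb p) + (sx * sx) * (sy * qc q)) + t^+2 * (sx * sx) * (sy * sy).
  by rewrite /c3; ring.
rewrite z3 hx1 hy1 mulr0 add0r !mul1r mulr1 in key.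
have tp : 0 < t^+2 by rewrite exprn_gt0.
have pos : 0 < sx * sy * c3.
  rewrite key; have : 0 <= t * (sx * qb p + sy * qc q) by apply: mulr_ge0; lra.
  lra.
have c30 : c3 != 0 by apply: contraTneq pos => ->; rewrite mulr0 ltxx.
have : 0 < c3 ^+ 2 by rewrite lt0r sqr_ge0 andbT sqrf_eq0.
have := sqr_ge0 ((qc p + t * 0) * (qd q + t * 0) - (qd p + t * 0) * (qc q + t * sy)).
have := sqr_ge0 ((qd p + t * 0) * (qb q + t * 0) - (qb p + t * sx) * (qd q + t * 0)).
rewrite -/c3; lra.
Qed.

End Path.
Local Open Scope classical_set_scope.


Section Final.
Variable R : realType.

Lemma hom_C (A B C : 'M[R]_3) : is_hom ((A, B), C) -> C = (B *m A)^T.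
Proof.
case; rewrite /hA /hB /hC /= => hAs hBs hCs hCBA.
have E : (B *m A) *m (B *m A)^T = 1%:M.
  rewrite trmx_mul mulmxA -(mulmxA B) (SO3_orth' hAs) mulmx1.
  exact: SO3_orth'.
by rewrite -[C]mulmx1 -E !mulmxA hCBA mul1mx.
Qed.

Lemma lift_pos (M : 'M[R]_3) : SO3 M -> exists p : quat R, [/\ qn2 p = 1, Qm p = M & 0 <= qa p].
Proof.
move=> hM; have [p [hp ep]] := lift hM.
case: (lerP 0 (qa p)) => h; first by exists p.
exists (qopp p); split.
- by rewrite -hp; case: (p) => a b c d /=; ring.
- by rewrite Qm_opp.
- by case: (p) h => a b c d /= h; lra.
Qed.

Lemma qn2_line_pos (p u : quat R) t : qn2 p = 1 -> qa u = 1 -> 0 <= qa p -> 0 <= t ->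
  0 < qn2 (qline p u t).
Proof.
move=> hp hu ha ht.
case: (eqVneq t 0) => [->|t0].
  by rewrite /qline !mul0r !addr0; case: (p) hp => a b c d /= ->.
have tp : 0 < t by rewrite lt0r t0.
rewrite qn2E /qline /= hu mulr1.
have : 0 < (qa p + t) * (qa p + t) by apply: mulr_gt0; lra.
have := sqr_ge0 (qb p + t * qb u); have := sqr_ge0 (qc p + t * qc u).
have := sqr_ge0 (qd p + t * qd u); rewrite !expr2; lra.
Qed.

Lemma path_exists (h0 : rep3 R) : is_hom h0 -> exists H : R -> rep3 R,
  [/\ H 0 = h0,
      forall t, 0 <= t -> is_hom (H t),
      forall t, 0 < t -> 0 < Sinv (H t) &
      forall t, 0 <= t -> forall e, 0 < e -> exists2 d : R, 0 < d &
        forall s, `|s - t| < d -> close (H t) (H s) e].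
Proof.
case: h0 => [[A B] C] hh.
have eC := hom_C hh.
case: (hh); rewrite /hA /hB /hC /= => hAs hBs _ _.
have [p [hp ep ap]] := lift_pos hAs.
have [q [hq eq aq]] := lift_pos hBs.
have [u [w [hu hw hD]]] := dir_choice p q.
exists (Hpath p q u w); split.
- by rewrite Hpath0 // ep eq eC.
- move=> t ht; apply: Hpath_hom; exact: qn2_line_pos.
- move=> t ht; apply: Hpath_S; try (apply: qn2_line_pos => //; exact: ltW).
  + by rewrite /qline /= hu mulr1; lra.
  + by rewrite /qline /= hw mulr1; lra.
  + exact: hD.
- move=> t ht; apply: Hpath_ct; exact: qn2_line_pos.
Qed.

Lemma SO3_1 : SO3 (1%:M : 'M[R]_3).
Proof. by split; rewrite ?trmx1 ?mul1mx ?det1. Qed.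

Lemma char_refl (h : rep3 R) : char_of h h.
Proof.
exists 1%:M; first exact: SO3_1.
case: h => [[A B] C]; by rewrite /conj_rep /hA /hB /hC /= invmx1 !mul1mx !mulmx1.
Qed.

End Final.

Theorem mainTheorem4 (R : realType) :
  (exists U : set (set (rep3 R)),
      [/\ open_char U, dense_char U & forall X, U X -> triangular_char X]) /\
  (forall X : set (rep3 R), is_char X ->
     exists gamma : R -> set (rep3 R),
       [/\ char_path gamma, gamma 0 = X &
           forall t, 0 < t <= 1 -> triangular_char (gamma t)]).
Proof.
split.
  exists (fun X : set (rep3 R) => exists h, [/\ is_hom h, X = char_of h & 0 < Sinv h]).
  split.
  - split.
      by move=> X [h [hh -> _]]; exists h.
    split; first by move=> h [].
    move=> h [hh [h0 [hh0 E hS0]]].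
    have : char_of h0 h by rewrite -E; exact: char_refl.
    case=> g hg eh.
    have hS : 0 < Sinv h by rewrite eh Sinv_conj.
    have [e e0 He] := Sinv_open hh hS.
    exists e => // h' hh' hc; split => //.
    by exists h'; split => //; apply: He.
  - move=> V [VS [_ Vop]] [X VX].
    have [h0 hh0 eX] := VS X VX.
    have [H [H0 Hhom HS Hct]] := path_exists hh0.
    have VX' : V (char_of h0) by rewrite -eX.
    have [e e0 He] := Vop h0 (conj hh0 VX').
    have [d d0 Hd] := Hct 0 (lexx 0) e e0.
    set s := if d <= 1 then d / 2 else 1 / 2.
    have s0 : 0 < s by rewrite /s; case: ifP => _; rewrite divr_gt0.
    have sd : `|s - 0| < d.
      rewrite subr0 gtr0_norm // /s; case: ifP => h; lra.
    have hs : is_hom (H s) by apply: Hhom; exact: ltW.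
    have [_ VHs] : is_hom (H s) /\ V (char_of (H s)).
      by apply: He => //; rewrite -H0; exact: Hd.
    exists (char_of (H s)); split => //.
    by exists (H s); split => //; apply: HS.
  - move=> X [h [hh -> hS]]; exists h; split => //; exact: S_pos_tri.
move=> X [h0 hh0 ->].
have [H [H0 Hhom HS Hct]] := path_exists hh0.
exists (fun t => char_of (H t)); split.
- split.
    move=> t /andP[t0 _]; by exists (H t) => //; apply: Hhom.
  move=> V [VS [_ Vop]] t /andP[t0 t1] VHt.
  have [e e0 He] := Vop (H t) (conj (Hhom t t0) VHt).
  have [d d0 Hd] := Hct t t0 e e0.
  exists d => // s /andP[s0 s1] hs.
  by have [_ VHs] := He (H s) (Hhom s s0) (Hd s hs).
- by rewrite H0.
- move=> t /andP[t0 t1]; exists (H t); split => //.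
    exact/Hhom/ltW.
  by apply: S_pos_tri; [exact/Hhom/ltW | exact: HS].
Qed.
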